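(* The relaxed capacity allocation subproblem (defined below) is equivalent to the maximum net-flow problem on the graph $Z$ (defined below). Hence, for any given set of VNF-nodes $\mathcal{U} \subseteq \mathcal{V}$, the optimal value of the relaxed capacity allocation subproblem equals the maximum total net-flow at the sinks in $\mathcal{U} \subseteq \mathcal{N}_{\mathcal{V}}$ of the associated graph $Z$, i.e., $R_3(\mathcal{U}) = F(\mathcal{U})$.
   Context: Setting: a network with node set $\mathcal{V}$ and a set of flows $\mathcal{F}$; flow $f$ has traffic rate $\lambda_f$ and is routed along a fixed path whose node set is $\mathcal{V}_f$; each node $v$ has processing capacity $c_v$. For a given set of VNF-nodes $\mathcal{U} \subseteq \mathcal{V}$, an assignment $\boldsymbol{\lambda}=(\lambda_f^v)\ge 0$ (the portion of flow $f$ processed at node $v$) is feasible, written $\boldsymbol{\lambda}\in\Lambda^{\mathcal{U}}$, if $\sum_{f \in \mathcal{F}} \lambda_f^v \le c_v$ for all $v \in \mathcal{U}$, $\lambda_f^v = 0$ for all $f$ and all $v \notin \mathcal{U}$, and $\sum_{v \in \mathcal{U}} \lambda_f^v \le \lambda_f$ for all $f$. The relaxed capacity allocation subproblem is to maximize $R_2^{\mathcal{U}}(\boldsymbol{\lambda}) = \sum_{f\in\mathcal{F}} \sum_{v \in \mathcal{V}_f \cap \mathcal{U}} \lambda_f^v$ over $\boldsymbol{\lambda}\in\Lambda^{\mathcal{U}}$, and $R_3(\mathcal{U}) = \max_{\boldsymbol{\lambda}\in\Lambda^{\mathcal{U}}} R_2^{\mathcal{U}}(\boldsymbol{\lambda})$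 denotes its optimal value. Graph $Z=(\mathcal{N},\mathcal{L})$: vertices are a source $s$, a flow-vertex $f$ for each $f\in\mathcal{F}$ (set $\mathcal{N}_{\mathcal{F}}$), a vertex $v'$ for each $v\in\mathcal{V}$ (set $\mathcal{N}_{\mathcal{V}'}$), and a vertex $v$ for each $v \in \mathcal{V}$ (set $\mathcal{N}_{\mathcal{V}}$, the sinks). Edges: $(s,f)$ with capacity $\lambda_f$ for every $f$; $(f,v')$ with capacity $\lambda_f$ for every $f$ and every $v\in\mathcal{V}_f$; $(v',v)$ with capacity $c_v$ for every $v$. Let $c(x,y)$ be the edge capacity ($c(x,y)=0$ if $(x,y)\notin\mathcal{L}$). For $\varphi:\mathcal{N}\times\mathcal{N}\to\mathbb{R}_+$ let $\Phi(\mathcal{X},\mathcal{Y})=\sum_{x\in\mathcal{X}}\sum_{y\in\mathcal{Y}}\varphi(x,y)$. An $s$-$\mathcal{V}$ flow is such a $\varphi$ with $\varphi(x,y)\le c(x,y)$ for all pairs, zero net-flow $\Phi(\mathcal{N},\{x\})-\Phi(\{x\},\mathcal{N})=0$ at every vertex other than $s$ and the sinks, non-positive net-flow at $s$, and non-negative net-flow at every sink in $\mathcal{N}_{\mathcal{V}}$; $\overline{\mathcal{F}}$ is the set of all $s$-$\mathcal{V}$ flows. Identifying $\mathcal{U}\subseteq\mathcal{V}$ with the corresponding sinks in $\mathcal{N}_{\mathcal{V}}$, $F(\mathcal{U}) = \max_{\varphi \in \overline{\mathcal{F}}} (\Phi(\mathcal{N}, \mathcal{U}) - \Phi(\mathcal{U},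 \mathcal{N}))$ is the maximum total net-flow at the sinks in $\mathcal{U}$ (the maximum net-flow problem). *)

(* Defs.v *)
From mathcomp Require Import all_boot all_order all_algebra.
From mathcomp Require Import reals.
Set Implicit Arguments. Unset Strict Implicit. Unset Printing Implicit Defensive.
Import Order.TTheory GRing.Theory Num.Theory.
Local Open Scope ring_scope.

Section Defs.
Variables (R : realType) (V Fl : finType).
Variables (lam : Fl -> R) (path : Fl -> {set V}) (c : V -> R).

Definition is_max (S : R -> Prop) (r : R) : Prop :=
  S r /\ forall y, S y -> y <= r.

(* an assignment: a f v = lambda_f^v *)
Definition feasible (U : {set V}) (a : Fl -> V -> R) : Prop :=
  [/\ forall f v, 0 <= a f v,
      forall v, v \in U -> \sum_(f : Fl) a f v <= c v,
      forall f v, v \notin U -> a f v = 0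
    & forall f, \sum_(v in U) a f v <= lam f].

Definition R2 (U : {set V}) (a : Fl -> V -> R) : R :=
  \sum_(f : Fl) \sum_(v in path f :&: U) a f v.

Definition R2_values (U : {set V}) (r : R) : Prop :=
  exists a, feasible U a /\ r = R2 U a.

(* vertices: source s, flow-vertices f, vertices v', sink vertices v *)
Definition node : finType := (unit + (Fl + (V + V)))%type.
Definition src : node := inl tt.
Definition fnode (f : Fl) : node := inr (inl f).
Definition vpnode (v : V) : node := inr (inr (inl v)).
Definition vnode (v : V) : node := inr (inr (inr v)).

(* edge capacities; 0 for non-edges *)
Definition cap (x y : node) : R :=
  match x, y with
  | inl _, inr (inl f) => lam f
  | inr (inl f), inr (inr (inl v)) => if v \in path f then lam f else 0
  | inr (inr (inl v)), inr (inr (inr w)) => if v == w then c v else 0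
  | _, _ => 0
  end.

Definition Phi (phi : node -> node -> R) (X Y : {set node}) : R :=
  \sum_(x in X) \sum_(y in Y) phi x y.

Definition netflow (phi : node -> node -> R) (x : node) : R :=
  Phi phi [set: node] [set x] - Phi phi [set x] [set: node].

Definition is_sink (x : node) : bool :=
  match x with inr (inr (inr _)) => true | _ => false end.

Definition sV_flow (phi : node -> node -> R) : Prop :=
  [/\ forall x y, 0 <= phi x y,
      forall x y, phi x y <= cap x y,
      forall x, x != src -> ~~ is_sink x -> netflow phi x = 0,
      netflow phi src <= 0
    & forall v, 0 <= netflow phi (vnode v)].

Definition sinks (U : {set V}) : {set node} := vnode @: U.

Definition netflow_values (U : {set V}) (r : R) : Prop :=
  exists phi, sV_flow phi /\
    r = Phi phi [set: node] (sinks U) - Phi phi (sinks U) [set: node].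

End Defs.

(* Main.v *)
Require Import Defs.
From mathcomp Require Import all_boot all_order all_algebra.
From mathcomp Require Import reals.
From mathcomp Require Import all_classical all_reals all_analysis.
Import Order.TTheory GRing.Theory Num.Theory.
Set Implicit Arguments. Unset Strict Implicit. Unset Printing Implicit Defensive.

Section P2.
Local Open Scope ring_scope.
Variables (R : realType) (V Fl : finType).
Variables (lam : Fl -> R) (path : Fl -> {set V}) (c : V -> R).
Hypothesis lam_ge0 : forall f, 0 <= lam f.
Hypothesis c_ge0 : forall v, 0 <= c v.
Variable U : {set V}.
Local Notation N := (node V Fl).
Implicit Types (phi : N -> N -> R).

Lemma sum_node (F : N -> R) :
  \sum_(x : N) F x = F (src V Fl) + (\sum_f F (fnode V f) +
     (\sum_v F (vpnode Fl v) + \sum_v F (vnode Fl v))).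
Proof.
rewrite big_sumType; congr (_ + _).
  by rewrite (eq_bigl (pred1 tt)) ?big_pred1_eq // => -[].
by rewrite big_sumType big_sumType.
Qed.

Lemma PhiT1 phi x : Phi phi [set: N]%SET [set x]%SET = \sum_y phi y x.
Proof. by rewrite /Phi; apply: eq_big => [y|y _]; rewrite ?finset.in_setT // big_set1. Qed.

Lemma Phi1T phi x : Phi phi [set x]%SET [set: N]%SET = \sum_y phi x y.
Proof. by rewrite /Phi big_set1; apply: eq_bigl => y; rewrite finset.in_setT. Qed.

Lemma Phi_sinksL phi :
  Phi phi [set: N]%SET (sinks Fl U) = \sum_(w in U) \sum_y phi y (vnode Fl w).
Proof.
rewrite /Phi exchange_big /= big_imset /=; last by move=> a b _ _ [].
by apply: eq_bigr => w _; apply: eq_bigl => y; rewrite finset.in_setT.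
Qed.

Lemma Phi_sinksR phi :
  Phi phi (sinks Fl U) [set: N]%SET = \sum_(w in U) \sum_y phi (vnode Fl w) y.
Proof.
rewrite /Phi big_imset /=; last by move=> a b _ _ [].
by apply: eq_bigr => w _; apply: eq_bigl => y; rewrite finset.in_setT.
Qed.


Definition flowval phi := Phi phi [set: N]%SET (sinks Fl U) - Phi phi (sinks Fl U) [set: N]%SET.

Lemma sum_sub_le (F : V -> R) (A : {set V}) : (forall v, 0 <= F v) ->
  \sum_(v in A) F v <= \sum_v F v.
Proof.
move=> F0; rewrite [X in _ <= X](bigID (fun v => v \in A)) /= lerDl.
by apply: sumr_ge0.
Qed.

Lemma flow_to_assign phi : sV_flow lam path c phi ->
  R2_values lam path c U (flowval phi).
Proof.
move=> [ge0 lecap cons src_le sink_ge].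
have z x y : cap lam path c x y = 0 -> phi x y = 0.
  by move=> h; apply/le_anti; rewrite ge0 andbT -h lecap.
have out_vn w : \sum_y phi (vnode Fl w) y = 0.
  by apply: big1 => y _; apply: z; case: y => [[]|[f|[v|v]]].
have in_vn w : \sum_y phi y (vnode Fl w) = phi (vpnode Fl w) (vnode Fl w).
  rewrite sum_node (z (src V Fl) (vnode Fl w) erefl) add0r big1 ?add0r => [|f _]; last exact: z.
  rewrite (bigD1 w) //= big1 ?addr0; last first.
    by move=> v /negbTE vw; apply: z => /=; rewrite vw.
  by rewrite big1 ?addr0 //; move=> *; exact: z.
have in_vp v : \sum_y phi y (vpnode Fl v) = \sum_f phi (fnode V f) (vpnode Fl v).
  rewrite sum_node (z (src V Fl) (vpnode Fl v) erefl) add0r.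
  rewrite [\sum_v0 phi (vpnode Fl v0) _]big1 ?add0r; last by move=> *; apply: z.
  by rewrite [\sum_v0 phi (vnode Fl v0) _]big1 ?addr0 //; move=> *; apply: z.
have out_vp v : \sum_y phi (vpnode Fl v) y = phi (vpnode Fl v) (vnode Fl v).
  rewrite sum_node (z (vpnode Fl v) (src V Fl) erefl) add0r.
  rewrite [\sum_f phi _ (fnode V f)]big1 ?add0r; last by move=> *; apply: z.
  rewrite [\sum_v0 phi _ (vpnode Fl v0)]big1 ?add0r; last by move=> *; apply: z.
  rewrite (bigD1 v) //= big1 ?addr0 // => w /negbTE wv; apply: z => /=.
  by rewrite eq_sym wv.
have in_f f : \sum_y phi y (fnode V f) = phi (src V Fl) (fnode V f).
  rewrite sum_node [\sum_f0 phi (fnode V f0) _]big1 ?add0r; last by move=> *; apply: z.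
  rewrite [\sum_v0 phi (vpnode Fl v0) _]big1 ?add0r; last by move=> *; apply: z.
  by rewrite [\sum_v0 phi (vnode Fl v0) _]big1 ?addr0 //; move=> *; apply: z.
have out_f f : \sum_y phi (fnode V f) y = \sum_v phi (fnode V f) (vpnode Fl v).
  rewrite sum_node (z (fnode V f) (src V Fl) erefl) add0r big1 ?add0r; last by move=> *; apply: z.
  by rewrite [X in _ + X]big1 ?addr0 //; move=> *; apply: z.
have cvp v : \sum_f phi (fnode V f) (vpnode Fl v) = phi (vpnode Fl v) (vnode Fl v).
  have := cons (vpnode Fl v) erefl erefl; rewrite /netflow PhiT1 Phi1T in_vp out_vp.
  by move/eqP; rewrite subr_eq0 => /eqP.
have cf f : \sum_v phi (fnode V f) (vpnode Fl v) = phi (src V Fl) (fnode V f).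
  have := cons (fnode V f) erefl erefl; rewrite /netflow PhiT1 Phi1T in_f out_f.
  by move/eqP; rewrite subr_eq0 => /eqP.
pose a f v := if v \in U then phi (fnode V f) (vpnode Fl v) else 0.
have aU f : \sum_(v in U) a f v = \sum_(v in U) phi (fnode V f) (vpnode Fl v).
  by apply: eq_bigr => v vU; rewrite /a vU.
exists a; split.
  split.
  - by move=> f v; rewrite /a; case: ifP.
  - move=> v vU; rewrite /a vU cvp; have := lecap (vpnode Fl v) (vnode Fl v).
    by rewrite /= eqxx.
  - by move=> f v /negbTE vU; rewrite /a vU.
  - move=> f; rewrite aU; apply: le_trans.
      by apply: (sum_sub_le U) => v; exact: ge0.
    by rewrite cf; apply: lecap.
rewrite /flowval /R2 Phi_sinksL Phi_sinksR [\sum_(w in U) \sum_y phi (vnode Fl w) y]big1 ?subr0; last by move=> *; apply: out_vn.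
under eq_bigr do rewrite in_vn -cvp.
rewrite exchange_big /=; apply: eq_bigr => f _.
rewrite (bigID (fun v => v \in path f)) /= [X in _ + X]big1 ?addr0.
  apply: eq_big => [v|v]; first by rewrite finset.in_setI andbC.
  by move=> /andP[vU _]; rewrite /a vU.
by move=> v /andP[_ /negbTE vp]; apply: z => /=; rewrite vp.
Qed.


Lemma sum_if_eq (G : V -> R) w : \sum_v (if v == w then G v else 0) = G w.
Proof. by rewrite -big_mkcond big_pred1_eq. Qed.

Lemma sum_subset_le (A B : {set V}) (F : V -> R) : A \subset B ->
  (forall v, 0 <= F v) -> \sum_(v in A) F v <= \sum_(v in B) F v.
Proof.
move=> /fintype.subsetP AB F0; rewrite [X in _ <= X](bigID (fun v => v \in A)) /=.
have -> : \sum_(v in B | v \in A) F v = \sum_(v in A) F v.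
  by apply: eq_bigl => v; apply/andP/idP => [[]//|vA]; split=> //; apply: AB.
by rewrite lerDl; apply: sumr_ge0.
Qed.

Definition mkflow (a : Fl -> V -> R) : N -> N -> R := fun x y =>
  match x, y with
  | inl _, inr (inl f) => \sum_(v in path f :&: U) a f v
  | inr (inl f), inr (inr (inl v)) => if v \in path f then a f v else 0
  | inr (inr (inl v)), inr (inr (inr w)) =>
      if v == w then \sum_f (if v \in path f then a f v else 0) else 0
  | _, _ => 0
  end.

Lemma assign_to_flow a : feasible lam c U a ->
  netflow_values lam path c U (R2 path U a).
Proof.
move=> [a0 ac aout alam].
pose phi := mkflow a.
have aP f v : (if v \in path f then a f v else 0) = a f v * (v \in path f)%:R.
  by case: ifP; rewrite ?mulr1 ?mulr0.
have sP f : \sum_(v in path f :&: U) a f v = \sum_v (if v \in path f then a f v else 0).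
  rewrite [RHS](bigID (fun v => v \in path f :&: U)) /= [X in _ + X]big1 ?addr0.
    by apply: eq_bigr => v; rewrite finset.in_setI => /andP[-> _].
  move=> v; rewrite finset.in_setI negb_and => /orP[/negbTE -> //|vU].
  by rewrite aout //; case: ifP.
have le_lam f v : a f v <= lam f.
  case vU: (v \in U); last by rewrite aout ?vU.
  apply: le_trans (alam f); rewrite (bigD1 v) //= lerDl; exact: sumr_ge0.
have sP' f : \sum_(v in path f :&: U) a f v = \sum_(v in U) (if v \in path f then a f v else 0).
  rewrite [RHS](bigID (fun v => v \in path f)) /= [X in _ + X]big1 ?addr0.
    apply: eq_big => [v|v]; first by rewrite finset.in_setI andbC.
    by rewrite finset.in_setI => /andP[-> _].
  by move=> v /andP[_ /negbTE ->].
have inS v : 0 <= \sum_f (if v \in path f then a f v else 0).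
  by apply: sumr_ge0 => f _; case: ifP.
have outvp v : \sum_w (if v == w then \sum_f (if v \in path f then a f v else 0) else 0)
   = \sum_f (if v \in path f then a f v else 0).
  rewrite (bigD1 v) //= eqxx [X in _ + X]big1 ?addr0 // => w wv.
  by rewrite eq_sym (negbTE wv).
exists phi; split; last first.
  rewrite /flowval Phi_sinksL Phi_sinksR [X in _ - X]big1 ?subr0; last first.
    move=> w _; apply: big1 => y _; by case: y => [[]|[f|[v|v]]].
  rewrite /R2; under [RHS]eq_bigr => w _ do rewrite sum_node /phi /= !big1_eq !add0r addr0 sum_if_eq.
  rewrite exchange_big /=; apply: eq_bigr => f _; rewrite sP'.
  by apply: eq_bigr => w _.

  split.
  - move=> x y; rewrite /phi /mkflow.
    case: x => [[]|[f|[v|v]]]; case: y => [[]|[f'|[v'|v']]] //=.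
    + by apply: sumr_ge0 => *.
    + by case: ifP.
    + by case: ifP => // _; apply: sumr_ge0 => *; case: ifP.
  - move=> x y; rewrite /phi /mkflow.
    case: x => [[]|[f|[v|v]]]; case: y => [[]|[f'|[v'|v']]] //=.
    + apply: le_trans (alam f'); apply: sum_subset_le => //.
      by apply/fintype.subsetP => v; rewrite finset.in_setI => /andP[].
    + by case: ifP.
    + case: eqP => [_|_] //; case vU: (v \in U).
        apply: le_trans (ac _ vU); apply: ler_sum => f _; case: ifP => _; [exact: lexx | exact: a0].
      by rewrite big1 // => f _; rewrite aout ?vU //; case: ifP.
  - case=> [[]|[f|[v|v]]] //.
    + move=> _ _; rewrite /netflow PhiT1 Phi1T !sum_node /phi /= !big1_eq !add0r !addr0.
      by rewrite sP subrr.
    + move=> _ _; rewrite /netflow PhiT1 Phi1T !sum_node /phi /= !big1_eq !add0r !addr0.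
      by rewrite outvp subrr.
  - rewrite /netflow PhiT1 Phi1T !sum_node /phi /= !big1_eq !add0r !addr0.
    by rewrite oppr_le0; apply: sumr_ge0 => f _; apply: sumr_ge0.
  - move=> v; rewrite /netflow PhiT1 Phi1T !sum_node /phi /= !big1_eq !add0r !addr0.
    by rewrite sum_if_eq subr0.
Qed.

End P2.

Section P1.
Import numFieldNormedType.Exports. Import ArrowAsProduct.
Local Open Scope ring_scope.
Local Open Scope classical_set_scope.
Variables (R : realType) (V Fl : finType).
Variables (lam : Fl -> R) (path : Fl -> {set V}) (c : V -> R).
Hypothesis lam_ge0 : forall f, 0 <= lam f.
Hypothesis c_ge0 : forall v, 0 <= c v.
Variable U : {set V}.
Local Notation I := (Fl * V)%type.
Local Notation X := (I -> R).

Lemma cont_proj (i : I) : continuous (fun g : X => g i).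
Proof. exact: (@proj_continuous I (fun _ => R) i). Qed.

Lemma cont_sum (J : Type) (r : seq J) (P : pred J) (F : J -> X -> R) :
  (forall j, continuous (F j)) -> continuous (fun g => \sum_(j <- r | P j) F j g).
Proof.
move=> Fc; elim: r => [|j r IH].
  have -> : (fun g : X => \sum_(j0 <- [::] | P j0) F j0 g) = (fun _ => 0).
    by apply: funext => g; rewrite big_nil.
  exact: cst_continuous.
have -> : (fun g : X => \sum_(j0 <- j :: r | P j0) F j0 g) =
   (fun g => (if P j then F j g else 0) + \sum_(j0 <- r | P j0) F j0 g).
  by apply: funext => g; rewrite big_cons; case: (P j); rewrite ?add0r.
move=> x; apply: continuousD; last exact: IH.
case: (P j); first exact: Fc.
exact: cst_continuous.
Qed.

Lemma closed_le_fun (L : X -> R) b : continuous L -> closed [set g | L g <= b].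
Proof.
move=> Lc; apply: (@preimage_closed _ _ L [set x | x <= b]); last exact: closed_le.
by move=> x _; exact: Lc.
Qed.

Lemma closed_ge_fun (L : X -> R) b : continuous L -> closed [set g | b <= L g].
Proof.
move=> Lc; apply: (@preimage_closed _ _ L [set x | b <= x]); last exact: closed_ge.
by move=> x _; exact: Lc.
Qed.

Lemma closed_eq_fun (L : X -> R) b : continuous L -> closed [set g | L g = b].
Proof.
move=> Lc; apply: (@preimage_closed _ _ L [set x | x = b]); last exact: closed_eq.
by move=> x _; exact: Lc.
Qed.

Lemma closed_all (J : Type) (P : J -> X -> Prop) :
  (forall j, closed [set g | P j g]) -> closed [set g | forall j, P j g].
Proof.
move=> Pc; have -> : [set g | forall j, P j g] = \bigcap_(j in [set: J]) [set g | P j g].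
  apply/seteqP; split => g /= H j; first by move=> _; exact: H.
  by apply: H.
exact: closed_bigI.
Qed.

Lemma closed_imp (b : bool) (P : X -> Prop) :
  closed [set g | P g] -> closed [set g | b -> P g].
Proof.
case: b => Pc.
  by have -> : [set g | true -> P g] = [set g | P g] by apply/seteqP; split => g /= //; apply.
by have -> : [set g | false -> P g] = setT by apply/seteqP; split => g /= //.
Qed.

Lemma closed_and (P Q : X -> Prop) :
  closed [set g | P g] -> closed [set g | Q g] -> closed [set g | P g /\ Q g].
Proof. by move=> Pc Qc; exact: (closedI Pc Qc). Qed.

Definition cur (g : X) : Fl -> V -> R := fun f v => g (f, v).

Definition Afeas : set X := [set g | feasible lam c U (cur g)].

Lemma Afeas_closed : closed Afeas.
Proof.
have -> : Afeas = [set g | (forall f v, 0 <= g (f, v)) /\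
   ((forall v, v \in U -> \sum_f g (f, v) <= c v) /\
   ((forall f v, v \notin U -> g (f, v) = 0) /\
    (forall f, \sum_(v in U) g (f, v) <= lam f)))].
  by apply/seteqP; split => g /=; [case | move=> [? [? [? ?]]]; split].
apply: closed_and.
  apply: closed_all => f; apply: closed_all => v.
  by apply: (@closed_ge_fun (fun g => g (f, v))); exact: cont_proj.
apply: closed_and.
  apply: closed_all => v; apply: closed_imp.
  apply: (@closed_le_fun (fun g => \sum_f g (f, v))).
  by apply: cont_sum => f; exact: cont_proj.
apply: closed_and.
  apply: closed_all => f; apply: closed_all => v; apply: closed_imp.
  by apply: (@closed_eq_fun (fun g => g (f, v))); exact: cont_proj.
apply: closed_all => f.
apply: (@closed_le_fun (fun g => \sum_(v in U) g (f, v))).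
by apply: cont_sum => v; exact: cont_proj.
Qed.


Lemma exists_opt : exists a, feasible lam c U a /\
  forall b, feasible lam c U b -> R2 path U b <= R2 path U a.
Proof.
pose B := \sum_f lam f.
have lamB f : lam f <= B.
  by rewrite /B (bigD1 f) //= lerDl; apply: sumr_ge0.
have sub : Afeas `<=` [set g : X | forall i, `[0, B] (g i)].
  move=> g [g0 gc gout glam] [f v] /=; rewrite in_itv /= (g0 f v) /=.
  case vU : (v \in U); last by rewrite [g (f, v)](gout f v) ?vU // (le_trans (lam_ge0 f)).
  apply: le_trans (lamB f); apply: le_trans (glam f).
  by rewrite (bigD1 v) //= lerDl; apply: sumr_ge0 => w _; exact: g0.
have cK := (@tychonoff I (fun _ => R) (fun _ => `[0, B]) (fun _ => @segment_compact R 0 B)).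
have cA : compact Afeas.
  apply: (subclosed_compact Afeas_closed cK).
  exact: sub.
have A0 : Afeas !=set0.
  exists (fun _ => 0); split => //=.
  - by move=> v _; rewrite big1_eq.
  - by move=> f; rewrite big1_eq.
have obj_c : continuous (fun g : X => R2 path U (cur g)).
  by apply: cont_sum => f; apply: cont_sum => v; exact: cont_proj.
have Ac : {within Afeas, continuous (fun g : X => R2 path U (cur g))}.
  exact: continuous_subspaceT.
have [g gA gmax] := compact_EVT_max A0 cA Ac.
exists (cur g); split; first by rewrite inE in gA.
move=> b bF; exact: (gmax (fun i => b i.1 i.2) (mem_set bF)).
Qed.

End P1.

Local Open Scope ring_scope.

Theorem lemma1 (R : realType) (V Fl : finType)
  (lam : Fl -> R) (path : Fl -> {set V}) (c : V -> R)
  (lam_ge0 : forall f, 0 <= lam f) (c_ge0 : forall v, 0 <= c v)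
  (U : {set V}) :
  exists r : R,
    is_max (R2_values lam path c U) r /\
    is_max (netflow_values lam path c U) r.
Proof.
have [a [aF amax]] : exists a, feasible lam c U a /\
    forall b, feasible lam c U b -> R2 path U b <= R2 path U a.
  exact: exists_opt.
exists (R2 path U a); split.
  split; first by exists a.
  by move=> y [b [bF ->]]; exact: amax.
split; first exact: assign_to_flow.
move=> y [phi [phiF ->]].
have := flow_to_assign U phiF; rewrite /flowval => -[b [bF ->]].
exact: amax.
Qed.
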